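(* Let $G$ be the $m\times n$ grid with $m,n\ge 2$, and let $L$ be a landmark set with $(1,z),(m,z')\in L$, where $1\le z<z'\le n$, such that $L$ contains no vertex $(1,w)$ with $z<w\le z'$. Then $L$ contains a vertex $(a,b)$ such that either ($b\le z$ and $a>1$) or ($b>z'$ and $a=1$).
   Context: The $m\times n$ grid $G$ has vertex set $V=\{(i,j):1\le i\le m,\ 1\le j\le n\}$, with $(i_1,j_1),(i_2,j_2)$ adjacent iff $|i_1-i_2|+|j_1-j_2|=1$; thus $d((i_1,j_1),(i_2,j_2))=|i_1-i_2|+|j_1-j_2|$. A vertex $x$ separates $u,v$ if $d(x,u)\neq d(x,v)$. A landmark set is $L\subseteq V$ such that every pair of distinct vertices is separated by some vertex of $L$. *)

(* Defs.v *)
From Stdlib Require Import Arith Lia.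

Definition vertex : Type := (nat * nat)%type.

Definition in_grid (m n : nat) (v : vertex) : Prop :=
  1 <= fst v <= m /\ 1 <= snd v <= n.

Definition absdiff (a b : nat) : nat := (a - b) + (b - a).

Definition gdist (u v : vertex) : nat :=
  absdiff (fst u) (fst v) + absdiff (snd u) (snd v).

Definition separates (x u v : vertex) : Prop := gdist x u <> gdist x v.

Definition landmark_set (m n : nat) (L : vertex -> Prop) : Prop :=
  (forall v, L v -> in_grid m n v) /\
  (forall u v, in_grid m n u -> in_grid m n v -> u <> v ->
     exists x, L x /\ separates x u v).

(* Main.v *)
Require Import Defs.
From Stdlib Require Import Arith Lia.

Theorem mainTheorem12 (m n : nat) (L : vertex -> Prop) (z z' : nat) :
  2 <= m -> 2 <= n ->
  landmark_set m n L ->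
  1 <= z -> z < z' -> z' <= n ->
  L (1, z) -> L (m, z') ->
  (forall w, z < w <= z' -> ~ L (1, w)) ->
  exists a b, L (a, b) /\ ((b <= z /\ a > 1) \/ (z' < b /\ a = 1)).
Proof.
  intros Hm Hn [Hin Hsep] Hz Hzz Hz' _ _ Hno.
  destruct (Hsep (1, S z) (2, z)) as [[a b] [HL Hs]].
  - unfold in_grid; simpl; lia.
  - unfold in_grid; simpl; lia.
  - intro H; inversion H; lia.
  - pose proof (Hin _ HL) as Hg; unfold in_grid in Hg; simpl in Hg.
    unfold separates, gdist, absdiff, fst, snd in Hs.
    exists a, b; split; [exact HL|].
    destruct (Nat.eq_dec a 1) as [Ha|Ha].
    + subst a.
      destruct (le_lt_dec b z) as [Hb|Hb].
      * exfalso; apply Hs; lia.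
      * destruct (le_lt_dec b z') as [Hb'|Hb'].
        -- exfalso; exact (Hno b (conj Hb Hb') HL).
        -- right; lia.
    + destruct (le_lt_dec b z) as [Hb|Hb].
      * left; lia.
      * exfalso; apply Hs; lia.
Qed.
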